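(* Let $\Gamma$ be a finite simplicial graph and $\mathbb{J}$ a collection of induced proper subgraphs of $\Gamma$. Assume that the right-angled Coxeter group $G_\Gamma$ is one-ended and hyperbolic relative to $\mathbb{P}=\{G_J : J\in\mathbb{J}\}$, and that each subgroup in $\mathbb{P}$ is one-ended. Let $J_0\in\mathbb{J}$ be such that some induced subgraph of $J_0$ separates $\Gamma$. Then one can write $\Gamma=\Gamma_1\cup\Gamma_2$ such that: (1) $\Gamma_1$ and $\Gamma_2$ are both proper induced subgraphs of $\Gamma$; (2) $\Gamma_1\cap\Gamma_2$ is an induced subgraph of $J_0$; (3) each $J\in\mathbb{J}$ lies completely inside $\Gamma_1$ or inside $\Gamma_2$.
   Context: For a finite simplicial graph $\Gamma$, the right-angled Coxeter group $G_\Gamma$ has generators the vertices of $\Gamma$ and relations $s^2=1$ and $st=ts$ for adjacent $s,t$; $G_J$ is the subgroup generated by the vertices of an induced subgraph $J$. An induced subgraph separates $\Gamma$ if its complement in $\Gamma$ is disconnected. *)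

(* Defs.v *)
From mathcomp Require Import all_boot.
Set Implicit Arguments. Unset Strict Implicit. Unset Printing Implicit Defensive.

Section RACG.
Variables (T : finType) (e : rel T).

(* Induced subgraphs of Gamma are identified with their vertex sets. *)
Definition induced_rel (B : {set T}) : rel T :=
  [rel x y | [&& e x y, x \in B & y \in B]].

Definition separates (A : {set T}) : Prop :=
  exists x y, [/\ x \notin A, y \notin A & ~~ connect (induced_rel (~: A)) x y].

(* Equality in the right-angled Coxeter group G_Gamma, on words over T:
   the congruence generated by s s = 1 and s t = t s for adjacent s, t. *)
Inductive weq : seq T -> seq T -> Prop :=
| weq_refl u : weq u u
| weq_sym u v : weq u v -> weq v u
| weq_trans u v w : weq u v -> weq v w -> weq u w
| weq_cancel u v s : weq (u ++ s :: s :: v) (u ++ v)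
| weq_comm u v s t : e s t -> weq (u ++ s :: t :: v) (u ++ t :: s :: v).

Section Graph.
Variables (V : Type) (veq : V -> V -> Prop) (adj : V -> V -> Prop).

Inductive gpath : nat -> V -> V -> Prop :=
| gpath0 a b : veq a b -> gpath 0 a b
| gpathS n a b c : adj a b -> gpath n b c -> gpath n.+1 a c.

Definition is_dist (a b : V) (n : nat) : Prop :=
  gpath n a b /\ forall m, gpath m a b -> n <= m.

Definition gromov_hyperbolic : Prop :=
  exists delta : nat, forall a b c d dab dcd dac dbd dad dbc,
    is_dist a b dab -> is_dist c d dcd -> is_dist a c dac ->
    is_dist b d dbd -> is_dist a d dad -> is_dist b c dbc ->
    dab + dcd <= maxn (dac + dbd) (dad + dbc) + 2 * delta.
End Graph.

Section Ends.
Variable S : {set T}.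

Definition Sword (w : seq T) : bool := all (mem S) w.

Definition avoids (K : seq (seq T)) (u : seq T) : Prop :=
  forall k, k \in K -> ~ weq u k.

(* connectivity in the Cayley graph of G_S (gen. set S) minus the finite set K *)
Inductive connK (K : seq (seq T)) : seq T -> seq T -> Prop :=
| connK0 u v : avoids K u -> weq u v -> connK K u v
| connKS u s w : avoids K u -> s \in S -> connK K (u ++ [:: s]) w -> connK K u w.

Definition infinite_comp (K : seq (seq T)) (u : seq T) : Prop :=
  forall L : seq (seq T), exists v, [/\ Sword v, connK K u v &
    forall l, l \in L -> ~ weq v l].

Definition one_ended : Prop :=
  (exists u, Sword u /\ infinite_comp [::] u) /\
  forall K u v, Sword u -> Sword v -> infinite_comp K u -> infinite_comp K v ->
    connK K u v.
End Ends.

Section Cusped.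
Variable P : {set {set T}}.

(* (x, None) : the vertex x of the Cayley graph of G_Gamma;
   (x, Some (J, n)) : the vertex (x, n+1) of the combinatorial horoball
   over the coset x G_J. *)
Definition cvert := (seq T * option ({set T} * nat))%type.

Definition cveq (a b : cvert) : Prop := a.2 = b.2 /\ weq a.1 b.1.

Definition cadj0 (a b : cvert) : Prop :=
  match a.2, b.2 with
  | None, None => exists s, weq (a.1 ++ [:: s]) b.1
  | None, Some (J, 0) => J \in P /\ weq a.1 b.1
  | Some (J, n), Some (J', n') =>
      J \in P /\ J' = J /\
      ((n' = n.+1 /\ weq a.1 b.1) \/
       (n' = n /\ ~ weq a.1 b.1 /\
        exists w, [/\ all (mem J) w, size w <= 2 ^ n.+1 & weq (a.1 ++ w) b.1]))
  | _, _ => False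
  end.

Definition cadj (a b : cvert) : Prop := cadj0 a b \/ cadj0 b a.

Definition rel_hyperbolic : Prop := gromov_hyperbolic cveq cadj.
End Cusped.

End RACG.

(* Main.v *)
Require Import Defs.
From Stdlib Require Import ZArith Lia Classical.
From mathcomp Require Import all_boot.
From mathcomp Require Import zify.
Set Implicit Arguments. Unset Strict Implicit. Unset Printing Implicit Defensive.

Section Words.
Variables (T : finType) (e : rel T).
Hypotheses (e_sym : symmetric e) (e_irr : irreflexive e).

Local Notation weq := (weq e).

Lemma weq_catl u v w : weq v w -> weq (u ++ v) (u ++ w).
Proof.
elim=> {v w}.
- by move=> v; apply: weq_refl.
- by move=> v w _ IH; apply: weq_sym.
- by move=> v w x _ IH1 _ IH2; apply: weq_trans IH2.
- by move=> u' v s; rewrite !catA; apply: weq_cancel.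
- by move=> u' v s t est; rewrite !catA; apply: weq_comm.
Qed.

Lemma weq_catr u v w : weq u v -> weq (u ++ w) (v ++ w).
Proof.
elim=> {u v}.
- by move=> v; apply: weq_refl.
- by move=> v x _ IH; apply: weq_sym.
- by move=> v x y _ IH1 _ IH2; apply: weq_trans IH2.
- by move=> u' v s; rewrite -!catA /=; apply: weq_cancel.
- by move=> u' v s t est; rewrite -!catA /=; apply: weq_comm.
Qed.

Lemma weq_past c u v r : all (e c) v -> weq (u ++ c :: v ++ r) (u ++ v ++ c :: r).
Proof.
elim: v u => [|d v IH] u /=; first by move=> _; apply: weq_refl.
case/andP=> ecd hv.
eapply weq_trans; first exact: (weq_comm u (v ++ r) ecd).
have := IH (u ++ [:: d]) hv; by rewrite -!catA.
Qed.

Lemma weq_rev u : weq (u ++ rev u) [::].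
Proof.
elim/last_ind: u => [|p c IH] /=; first by apply: weq_refl.
rewrite rev_rcons -cats1 -catA /=.
by apply: weq_trans (weq_cancel e p (rev p) c) IH.
Qed.


End Words.

(* affine invariant (D_infinity) *)
Section Aff.
Variables (T : finType) (s t : T).

Definition aff := (bool * Z)%type.
Definition acomp (f g : aff) : aff :=
  (xorb f.1 g.1, ((if f.1 then - g.2 else g.2) + f.2)%Z).
Definition Al (c : T) : aff :=
  if c == s then (true, 1%Z) else if c == t then (true, (-1)%Z) else (false, 0%Z).
Definition A (w : seq T) : aff := foldl (fun f c => acomp f (Al c)) (false, 0%Z) w.

Lemma comp1f f : acomp (false, 0%Z) f = f.
Proof. by case: f => [b z]; rewrite /acomp /=; f_equal; lia. Qed.
Lemma compf1 f : acomp f (false, 0%Z) = f.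
Proof. by case: f => [[] z]; rewrite /acomp /=; f_equal; lia. Qed.
Lemma compA f g h : acomp f (acomp g h) = acomp (acomp f g) h.
Proof.
case: f g h => [b1 z1] [b2 z2] [b3 z3]; rewrite /acomp /=.
by case: b1; case: b2; case: b3 => /=; f_equal; lia.
Qed.

Lemma foldl_A f v : foldl (fun f c => acomp f (Al c)) f v = acomp f (A v).
Proof.
elim: v f => [|c v IH] f /=; first by rewrite compf1.
rewrite /A /= IH [in RHS]IH comp1f; by rewrite compA.
Qed.

Lemma A_cat u v : A (u ++ v) = acomp (A u) (A v).
Proof. by rewrite /A foldl_cat -/(A u) foldl_A. Qed.

Lemma A_cons c v : A (c :: v) = acomp (Al c) (A v).
Proof. by rewrite -cat1s A_cat /A /= comp1f. Qed.

Lemma Al2 c : acomp (Al c) (Al c) = (false, 0%Z).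
Proof.
rewrite /Al; case: (c == s); first by rewrite /acomp /=; f_equal; lia.
by case: (c == t); rewrite /acomp /=; f_equal; lia.
Qed.

Lemma Al_id c : c != s -> c != t -> Al c = (false, 0%Z).
Proof. by rewrite /Al => /negbTE -> /negbTE ->. Qed.

Lemma Al_comm (e : rel T) (e_sym : symmetric e) (e_irr : irreflexive e)
  (nst : ~~ e s t) c d : e c d -> acomp (Al c) (Al d) = acomp (Al d) (Al c).
Proof.
move=> ecd.
have cd : c != d by apply: contraTneq ecd => ->; rewrite e_irr.
case: (eqVneq c s) => [cs|cs].
  have ds : d != s by rewrite -cs eq_sym.
  case: (eqVneq d t) => [dt|dt].
    by move: ecd; rewrite cs dt (negbTE nst).
  by rewrite (Al_id ds dt) compf1 comp1f.
case: (eqVneq c t) => [ct|ct]; last by rewrite (Al_id cs ct) compf1 comp1f.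
have dt : d != t by rewrite -ct eq_sym.
case: (eqVneq d s) => [ds|ds].
  by move: ecd; rewrite ct ds e_sym (negbTE nst).
by rewrite (Al_id ds dt) compf1 comp1f.
Qed.

Lemma weq_A (e : rel T) (e_sym : symmetric e) (e_irr : irreflexive e)
  (nst : ~~ e s t) u v : Defs.weq e u v -> A u = A v.
Proof.
elim=> {u v}.
- by [].
- by move=> u v _ ->.
- by move=> u v w _ -> _ ->.
- by move=> u v c; rewrite !A_cat !A_cons (compA (Al c)) Al2 comp1f.
- move=> u v c d ecd; rewrite !A_cat !A_cons.
  by rewrite (compA (Al c)) (compA (Al d)) (Al_comm e_sym e_irr nst ecd).
Qed.

Definition tau w := (A w).2.

Lemma tau_small w : (Z.abs (tau w) <= Z.of_nat (size w))%Z.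
Proof.
elim: w => [|c w IH]; first by rewrite /tau /=; lia.
rewrite /tau A_cons /acomp /= -/(tau w).
rewrite /Al; case: (c == s); last case: (c == t); simpl; case: (A w).1; lia.
Qed.

Lemma tau_cat u w : (Z.abs (tau (u ++ w) - tau u) <= Z.of_nat (size w))%Z.
Proof.
rewrite /tau A_cat /acomp /=. have := @tau_small w; rewrite /tau.
case: (A u).1; lia.
Qed.

End Aff.

Section Pile.
Variables (T : finType) (e : rel T).
Hypotheses (e_sym : symmetric e) (e_irr : irreflexive e).

Local Notation weq := (weq e).

Definition state := {ffun T -> seq bool}.
Definition push (s : T) (S : state) : state :=
  [ffun v => if e s v then S v else (v == s) :: S v].
Definition pop (s : T) (S : state) : state :=
  [ffun v => if e s v then S v else behead (S v)].
Definition top (s : T) (S : state) := head false (S s).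
Definition step (s : T) (S : state) := if top s S then pop s S else push s S.
Definition S0 : state := [ffun _ => [::]].
Definition Push (w : seq T) := foldl (fun S c => push c S) S0 w.
Definition Pile (w : seq T) := foldl (fun S c => step c S) S0 w.

Inductive ceq : seq T -> seq T -> Prop :=
| ceq_refl u : ceq u u
| ceq_trans u v w : ceq u v -> ceq v w -> ceq u w
| ceq_swap u v p q : e p q -> ceq (u ++ p :: q :: v) (u ++ q :: p :: v).

Lemma ceq_sym u v : ceq u v -> ceq v u.
Proof.
elim=> {u v}; first by move=> u; apply: ceq_refl.
- by move=> u v w _ H1 _ H2; apply: ceq_trans H2 H1.
- by move=> u v p q epq; apply: ceq_swap; rewrite e_sym.
Qed.

Lemma ceq_catr u v w : ceq u v -> ceq (u ++ w) (v ++ w).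
Proof.
elim=> {u v}; first by move=> u; apply: ceq_refl.
- by move=> u v x _ H1 _ H2; apply: ceq_trans H2.
- by move=> u v p q epq; rewrite -!catA /=; apply: ceq_swap.
Qed.

Lemma ceq_weq u v : ceq u v -> weq u v.
Proof.
elim=> {u v}; first by move=> u; apply: weq_refl.
- by move=> u v x _ H1 _ H2; apply: weq_trans H2.
- by move=> u v p q epq; apply: weq_comm.
Qed.

Lemma ceq_perm u v : ceq u v -> perm_eq u v.
Proof.
elim=> {u v}; first by move=> u; apply: perm_refl.
- by move=> u v x _ H1 _ H2; apply: perm_trans H2.
- move=> u v p q _; rewrite perm_cat2l.
  by rewrite -(cat1s p) -(cat1s q) perm_catCA.
Qed.

Lemma ceq_past c u v r : all (e c) v -> ceq (u ++ c :: v ++ r) (u ++ v ++ c :: r).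
Proof.
elim: v u => [|d v IH] u /=; first by move=> _; apply: ceq_refl.
case/andP=> ecd hv.
eapply ceq_trans; first exact: (ceq_swap u (v ++ r) ecd).
have := IH (u ++ [:: d]) hv; by rewrite -!catA.
Qed.

Lemma Push_rcons w c : Push (rcons w c) = push c (Push w).
Proof. by rewrite /Push -cats1 foldl_cat. Qed.
Lemma Pile_rcons w c : Pile (rcons w c) = step c (Pile w).
Proof. by rewrite /Pile -cats1 foldl_cat. Qed.

Lemma push_comm p q S : e p q -> push p (push q S) = push q (push p S).
Proof.
move=> epq; apply/ffunP => v; rewrite !ffunE.
case: (boolP (e p v)) => epv; case: (boolP (e q v)) => eqv //.
have vp : v != p by apply: contraNneq eqv => ->; rewrite e_sym.
have vq : v != q by apply: contraNneq epv => ->.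
by rewrite (negbTE vp) (negbTE vq).
Qed.

Lemma Push_ceq u v : ceq u v -> Push u = Push v.
Proof.
elim=> {u v} //.
- by move=> u v w _ -> _ ->.
- by move=> u v p q epq; rewrite /Push !foldl_cat /= push_comm // e_sym.
Qed.

Lemma pop_push s S : pop s (push s S) = S.
Proof. by apply/ffunP => v; rewrite !ffunE; case: (e s v). Qed.

Lemma top_push s c S : top s (push c S) = if e c s then top s S else (s == c).
Proof. by rewrite /top ffunE; case: (e c s). Qed.

Lemma top_Push s w : top s (Push w) ->
  exists w1 w2, w = w1 ++ s :: w2 /\ all (e s) w2.
Proof.
elim/last_ind: w => [|p c IH]; first by rewrite /top /Push /= ffunE.
rewrite Push_rcons top_push.
case: (boolP (e c s)) => ecs.
  move/IH => [w1 [w2 [-> h]]]; exists w1, (rcons w2 c); split.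
    by rewrite rcons_cat.
  by rewrite all_rcons e_sym ecs.
by move/eqP=> ->; exists p, [::]; rewrite cats1.
Qed.

Lemma notin_all s w : all (e s) w -> s \notin w.
Proof. by move=> h; apply/negP => /(allP h); rewrite e_irr. Qed.

Lemma Push_remove s w1 w2 : all (e s) w2 ->
  Push (w1 ++ s :: w2) = push s (Push (w1 ++ w2)).
Proof.
move=> h; have := Push_ceq (ceq_past w1 [::] h); rewrite !cats0 => ->.
by rewrite catA cats1 Push_rcons.
Qed.

Lemma Push_nil r : Push [::] = Push r -> r = [::].
Proof.
case/lastP: r => [|p c] // /(congr1 (fun S : state => S c)).
by rewrite Push_rcons /push /Push /= !ffunE e_irr eqxx.
Qed.

Lemma Push_inj r r' : Push r = Push r' -> ceq r r'.
Proof.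
elim/last_ind: r r' => [|p c IH] r'.
  by move/Push_nil => ->; apply: ceq_refl.
move=> H.
have : top c (Push r') by rewrite -H Push_rcons top_push e_irr eqxx.
case/top_Push => [w1 [w2 [Er' h]]].
move: H; rewrite Er' Push_remove // Push_rcons => /(congr1 (pop c)).
rewrite !pop_push => /IH H.
eapply ceq_trans; first by rewrite -cats1; apply: (ceq_catr [:: c] H).
rewrite -catA /=; apply: ceq_sym; have := ceq_past w1 [::] h; by rewrite cats0.
Qed.

Definition remlast (s : T) (r : seq T) : seq T := rev (rem s (rev r)).

Lemma rem_catl (s : T) (u v : seq T) : s \notin u -> rem s (u ++ s :: v) = u ++ v.
Proof.
elim: u => [|a u IH] /=; first by rewrite eqxx.
by rewrite in_cons negb_or => /andP [/negbTE]; rewrite eq_sym => -> /IH ->.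
Qed.

Lemma remlast_eq (s : T) (w1 w2 : seq T) : s \notin w2 -> remlast s (w1 ++ s :: w2) = w1 ++ w2.
Proof.
move=> h; rewrite /remlast rev_cat rev_cons -cats1 -catA /=.
by rewrite rem_catl ?mem_rev // rev_cat !revK.
Qed.

Definition stepW (r : seq T) (s : T) :=
  if top s (Push r) then remlast s r else rcons r s.
Definition nf (w : seq T) := foldl stepW [::] w.

Lemma nf_rcons w c : nf (rcons w c) = stepW (nf w) c.
Proof. by rewrite /nf -cats1 foldl_cat. Qed.

Lemma Push_stepW r s : Push (stepW r s) = step s (Push r).
Proof.
rewrite /stepW /step; case: ifP => h; last by rewrite Push_rcons.
case/top_Push: (h) => [w1 [w2 [-> a]]].
by rewrite remlast_eq ?notin_all // Push_remove // pop_push.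
Qed.

Lemma Pile_nf w : Pile w = Push (nf w).
Proof.
elim/last_ind: w => [|w c IH] //.
by rewrite Pile_rcons nf_rcons Push_stepW IH.
Qed.

Lemma weq_nf w : weq w (nf w).
Proof.
elim/last_ind: w => [|w c IH]; first by apply: weq_refl.
rewrite nf_rcons /stepW; case: ifP => h.
  case/top_Push: (h) => [w1 [w2 [E a]]]; rewrite E remlast_eq ?notin_all //.
  rewrite -!cats1; eapply weq_trans; first exact: (weq_catr [:: c] IH).
  rewrite E -catA /=.
  eapply weq_trans; first exact: (weq_past w1 (c :: nil) a).
  by have := weq_cancel e (w1 ++ w2) [::] c; rewrite cats0 -catA.
by rewrite -!cats1; apply: weq_catr.
Qed.

Lemma nf_sub w : {subset nf w <= w}.
Proof.
elim/last_ind: w => [|w c IH] //.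
rewrite nf_rcons /stepW; case: ifP => _ x.
  rewrite /remlast mem_rev => /mem_rem; rewrite mem_rev => /IH.
  by rewrite mem_rcons in_cons orbC => ->.
by rewrite !mem_rcons !in_cons => /orP [->|/IH ->]; rewrite ?orbT.
Qed.

Fixpoint nc (l : seq bool) : bool :=
  match l with
  | b :: ((b' :: _) as l') => ~~ (b && b') && nc l'
  | _ => true
  end.

Lemma nc_behead l : nc l -> nc (behead l).
Proof. by case: l => [|b [|b' l]] //= /andP []. Qed.

Lemma Pile_nc w v : nc (Pile w v).
Proof.
elim/last_ind: w v => [|w c IH] v; first by rewrite /Pile /= ffunE.
rewrite Pile_rcons /step; case: ifP => h; rewrite !ffunE; case: (e c v) => //.
  exact: nc_behead.
case: eqP => [->|_] /=.
  move: h (IH c); rewrite /top; case: (Pile w c) => [|[] l] //=.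
move: (IH v); case: (Pile w v) => [|b l] //=.
Qed.

Definition good (S : state) := (exists r, S = Push r) /\ forall v, nc (S v).

Lemma good_Pile w : good (Pile w).
Proof. split; [exists (nf w); exact: Pile_nf | exact: Pile_nc]. Qed.

Lemma top_pop_false S s : good S -> top s S -> forall v, ~~ e s v -> v != s ->
  exists l, S v = false :: l.
Proof.
move=> [[r ->] _] /top_Push [w1 [w2 [-> a]]] v esv vs.
rewrite Push_remove // /push ffunE (negbTE esv) (negbTE vs); by eexists.
Qed.

Lemma top_eq_push S s : good S -> top s S -> S = push s (pop s S).
Proof.
move=> [[r ->] _] /top_Push [w1 [w2 [-> a]]].
by rewrite Push_remove // pop_push.
Qed.

Lemma R1 S s : good S -> step s (step s S) = S.
Proof.
move=> g; case h: (top s S).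
  have hp : top s (pop s S) = false.
    move: (g.2 s) h; rewrite /top /pop ffunE e_irr.
    by case: (S s) => [|[] [|[] l]].
  by rewrite /step h hp -top_eq_push.
have hp : top s (push s S) by rewrite /top /push ffunE e_irr eqxx.
by rewrite /step h hp pop_push.
Qed.

Lemma top_push_other s t S : e t s -> top s (push t S) = top s S.
Proof. by move=> h; rewrite top_push h. Qed.
Lemma top_pop_other s t S : e t s -> top s (pop t S) = top s S.
Proof. by move=> h; rewrite /top /pop ffunE h. Qed.

Lemma pop_push_comm S s t : good S -> e s t -> top s S ->
  pop s (push t S) = push t (pop s S).
Proof.
move=> g est ts; apply/ffunP => v; rewrite !ffunE.
case: (boolP (e s v)) => esv; case: (boolP (e t v)) => etv //.
have vs : v != s by apply: contraNneq etv => ->; rewrite e_sym.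
have vt : v != t by apply: contraNneq esv => ->.
have [l El] := top_pop_false g ts esv vs.
by rewrite El (negbTE vt).
Qed.

Lemma pop_comm S s t : pop s (pop t S) = pop t (pop s S).
Proof.
apply/ffunP => v; rewrite !ffunE.
by case: (e s v); case: (e t v).
Qed.

Lemma R2 S s t : good S -> e s t -> step s (step t S) = step t (step s S).
Proof.
move=> g est; have ets : e t s by rewrite e_sym.
rewrite /step.
case: (boolP (top t S)) => ht; case: (boolP (top s S)) => hs.
- by rewrite !top_pop_other // hs ht pop_comm.
- rewrite top_pop_other // (negbTE hs) top_push_other // ht.
  by rewrite (pop_push_comm g ets ht).
- rewrite top_push_other // hs top_pop_other // (negbTE ht).
  by rewrite (pop_push_comm g est hs).
- rewrite !top_push_other // (negbTE hs) (negbTE ht).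
  by rewrite push_comm.
Qed.

Lemma Pile_cat u v : Pile (u ++ v) = foldl (fun S c => step c S) (Pile u) v.
Proof. by rewrite /Pile foldl_cat. Qed.

Lemma weq_Pile u v : weq u v -> Pile u = Pile v.
Proof.
elim=> {u v}.
- by [].
- by move=> u v _ ->.
- by move=> u v w _ -> _ ->.
- by move=> u v s; rewrite !Pile_cat /= R1 //; apply: good_Pile.
- by move=> u v s t est; rewrite !Pile_cat /= R2 //; try exact: good_Pile; rewrite e_sym.
Qed.

Lemma weq_nf_ceq u v : weq u v -> ceq (nf u) (nf v).
Proof. by move/weq_Pile; rewrite !Pile_nf; apply: Push_inj. Qed.

End Pile.

Section Side.
Variables (T : finType) (e : rel T).
Hypotheses (e_sym : symmetric e) (e_irr : irreflexive e).
Local Notation weq := (weq e).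
Local Notation ceq := (ceq e).
Local Notation nf := (nf e).

Lemma weq_avoids F u v : avoids e F v -> weq u v -> avoids e F u.
Proof. by move=> h uv k /h hk uk; apply: hk; apply: weq_trans (weq_sym uv) uk. Qed.

Lemma connK_avoids S F u w : connK e S F u w -> avoids e F u.
Proof. by case. Qed.

Lemma connK_ext S F u v c : connK e S F u v -> avoids e F (v ++ [:: c]) ->
  c \in S -> connK e S F u (v ++ [:: c]).
Proof.
elim=> {u v}.
- move=> u v au uv av cS; apply: (@connKS _ _ _ _ u c) => //.
  have wc : weq (u ++ [:: c]) (v ++ [:: c]) by apply: weq_catr.
  apply: connK0; [exact: (weq_avoids av wc)| exact: wc].
- move=> u s w au sS _ IH av cS; apply: (@connKS _ _ _ _ u s) => //; exact: IH.
Qed.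

Variables (J K C : {set T}).
Hypothesis Kcl : forall p q, p \in K -> q \in K -> p != q -> e p q.
Hypothesis side : forall p q, p \in J -> q \in J -> p \notin K -> q \notin K ->
  e p q -> (p \in C) = (q \in C).

Definition sig (w : seq T) : bool :=
  if [seq c <- w | c \notin K] is c :: _ then c \in C else false.

Lemma sig_ceq u v : ceq u v -> all (mem J) u -> sig u = sig v.
Proof.
elim=> {u v}.
- by [].
- move=> u v w uv IH1 _ IH2 hu; rewrite IH1 // IH2 //.
  by rewrite -(perm_all _ (ceq_perm uv)).
- move=> u v p q epq; rewrite all_cat /= => /and3P [_ pJ /andP [qJ _]].
  rewrite /sig !filter_cat; case: [seq c <- u | c \notin K] => [|c l] //=.
  case pK: (p \in K); case qK: (q \in K) => //=.
  by apply: side => //; rewrite ?pK ?qK.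
Qed.

Lemma sig_rcons r s : has (fun c => c \notin K) r -> sig (rcons r s) = sig r.
Proof.
rewrite has_filter /sig filter_rcons.
case: [seq c <- r | c \notin K] => [|c l] //= _.
by case: (s \notin K).
Qed.

Fixpoint kwords (n : nat) : seq (seq T) :=
  [::] :: (if n is n'.+1 then [seq c :: w | c <- enum K, w <- kwords n'] else [::]).

Lemma kwords_mem n w : all (mem K) w -> size w <= n -> w \in kwords n.
Proof.
elim: n w => [|n IH] [|c w] //= /andP [cK wK] sw.
rewrite in_cons /=.
by apply: (allpairs_f (fun c w => c :: w)); rewrite ?mem_enum //; apply: IH.
Qed.

Lemma kshort w : all (mem K) w -> exists w', [/\ uniq w', all (mem K) w' & weq w w'].
Proof.
elim/last_ind: w => [|p c IH]; first by exists [::]; split=> //; apply: weq_refl.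
rewrite all_rcons => /andP [cK /IH [p' [up pK wp]]].
case: (boolP (c \in p')) => cp.
  case/splitPr: cp up pK wp => p1 p2 up pK wp.
  have u2 : uniq (c :: p1 ++ p2).
    have pp : perm_eq ([:: c] ++ p1 ++ p2) (p1 ++ [:: c] ++ p2) by rewrite perm_catCA.
    by rewrite -cat1s (perm_uniq pp).
  exists (p1 ++ p2); split.
  - by case/andP: u2.
  - by move: pK; rewrite !all_cat /= => /and3P [-> _ ->].
  have a2 : all (e c) p2.
    apply/allP => q qp2; apply: Kcl => //.
      by move: pK; rewrite all_cat /= => /and3P [_ _ /allP]; apply.
    by apply: contraTneq qp2 => <-; move: u2; rewrite /= mem_cat negb_or => /andP [/andP [_ ->]].
  rewrite -!cats1; eapply weq_trans; first exact: (weq_catr [:: c] wp).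
  rewrite -catA /=.
  eapply weq_trans; first exact: (weq_past p1 [:: c] a2).
  by have := weq_cancel e (p1 ++ p2) [::] c; rewrite cats0 -catA.
exists (rcons p' c); split.
- by rewrite rcons_uniq cp.
- by rewrite all_rcons cK.
by rewrite -!cats1; apply: weq_catr.
Qed.

Definition F := kwords #|K|.

Lemma K_in_F w : all (mem K) w -> exists2 f, f \in F & weq w f.
Proof.
case/kshort => w' [uw aw ww]; exists w' => //.
apply: kwords_mem => //.
apply/card_geqP; exists w'; split => //.
by move=> z zw; move/allP: aw => /(_ z zw).
Qed.

Lemma avoid_has u : avoids e F u -> has (fun c => c \notin K) (nf u).
Proof.
move=> au; case: (boolP (has _ _)) => // hn.
have : all (mem K) (nf u).
  apply/allP => z zn; case: (boolP (z \in K)) => // zK.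
  by case/negP: hn; apply/hasP; exists z.
case/K_in_F => f fF wf; case: (au f fF).
by apply: weq_trans (weq_nf e_sym e_irr u) wf.
Qed.

Lemma nf_J u : all (mem J) u -> all (mem J) (nf u).
Proof. by move/allP=> h; apply/allP => z /nf_sub /h. Qed.

Lemma sig_step u s : all (mem J) u -> s \in J -> avoids e F u ->
  avoids e F (u ++ [:: s]) -> sig (nf (u ++ [:: s])) = sig (nf u).
Proof.
move=> uJ sJ au aus.
have hs := avoid_has aus; have hu := avoid_has au.
move: hs; rewrite cats1 nf_rcons /stepW; case: ifP => h hs.
  case/(top_Push e_sym): h => [w1 [w2 [E a]]].
  move: hs; rewrite E remlast_eq ?(notin_all e_irr) // => hs.
  rewrite -(sig_rcons s hs); apply: esym; apply: sig_ceq.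
    by have := ceq_past w1 [::] a; rewrite cats0 -cats1 -catA.
  by rewrite -E nf_J.
by rewrite sig_rcons.
Qed.

Lemma connK_sig u v : connK e J F u v -> all (mem J) u -> sig (nf u) = sig (nf v).
Proof.
elim=> {u v}.
- move=> u v _ uv uJ; apply: sig_ceq; first exact: weq_nf_ceq.
  exact: nf_J.
- move=> u s w au sJ cw IH uJ.
  have usJ : all (mem J) (u ++ [:: s]) by rewrite all_cat uJ /= sJ.
  by rewrite -IH // sig_step //; apply: (connK_avoids cw).
Qed.

Variables (x y : T).
Hypotheses (xJ : x \in J) (yJ : y \in J) (xK : x \notin K) (yK : y \notin K)
  (xC : x \in C) (yC : y \notin C).

Lemma nf1 z : nf [:: z] = [:: z].
Proof. by rewrite /nf /= /stepW /top /Push /= ffunE. Qed.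

Lemma nxy : ~~ e x y.
Proof. by apply/negP => exy; move: (side xJ yJ xK yK exy); rewrite xC (negbTE yC). Qed.
Lemma xny : x != y.
Proof. by apply: contraTneq xC => ->. Qed.

Fixpoint Wx (a b : T) n := if n is n'.+1 then Wx a b n' ++ [:: b; a] else [:: a].

Lemma A_id w : all (fun c => (c != x) && (c != y)) w -> A x y w = (false, 0%Z).
Proof.
elim/last_ind: w => [|w c IH] //; rewrite all_rcons => /andP [/andP [cx cy] /IH].
rewrite -cats1 A_cat => ->; rewrite comp1f /A /= Al_id //.
Qed.

Lemma F_A f : f \in F -> A x y f = (false, 0%Z).
Proof.
move=> fF; apply: A_id.
suff: all (mem K) f.
  apply: sub_all => z zK; apply/andP; split; apply: contraTneq zK => ->.
  - exact: xK.
  - exact: yK.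
move: fF; rewrite /F; elim: #|K| f => [|n IH] f /=.
  by rewrite in_cons => /orP [/eqP -> | ].
rewrite in_cons => /orP [/eqP -> //|].
case/allpairsP => [[c w] /= [cK wk ->]] /=.
by rewrite mem_enum in cK; rewrite cK IH.
Qed.

Lemma avoids_A w : A x y w <> (false, 0%Z) -> avoids e F w.
Proof. by move=> h f fF wf; apply: h; rewrite (weq_A e_sym e_irr nxy wf) F_A. Qed.

Lemma AWx n : A x y (Wx x y n) = (true, Z.of_nat (2 * n + 1)) /\
  A x y (Wx x y n ++ [:: y]) = (false, Z.of_nat (2 * n + 2)).
Proof.
have Ay : Al x y y = (true, (-1)%Z) by rewrite /Al eq_sym (negbTE xny) eqxx.
have Ax : Al x y x = (true, 1%Z) by rewrite /Al eqxx.
have H1 : forall w, A x y (w ++ [:: y]) = acomp (A x y w) (true, (-1)%Z).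
  by move=> w; rewrite A_cat /A /= Ay comp1f.
have H2 : forall w, A x y (w ++ [:: x]) = acomp (A x y w) (true, 1%Z).
  by move=> w; rewrite A_cat /A /= Ax comp1f.
elim: n => [|n [IH1 IH2]].
  by rewrite /A /= Ax Ay /acomp /=; split; f_equal.
have E : Wx x y n.+1 = (Wx x y n ++ [:: y]) ++ [:: x] by rewrite /= -catA.
rewrite E; split; first by rewrite H2 IH2 /acomp; cbn [fst snd xorb]; f_equal; lia.
by rewrite H1 H2 IH2 /acomp; cbn [fst snd xorb]; f_equal; lia.
Qed.

Lemma AWy n : A x y (Wx y x n) = (true, (- Z.of_nat (2 * n + 1))%Z) /\
  A x y (Wx y x n ++ [:: x]) = (false, (- Z.of_nat (2 * n + 2))%Z).
Proof.
have Ay : Al x y y = (true, (-1)%Z) by rewrite /Al eq_sym (negbTE xny) eqxx.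
have Ax : Al x y x = (true, 1%Z) by rewrite /Al eqxx.
have H1 : forall w, A x y (w ++ [:: y]) = acomp (A x y w) (true, (-1)%Z).
  by move=> w; rewrite A_cat /A /= Ay comp1f.
have H2 : forall w, A x y (w ++ [:: x]) = acomp (A x y w) (true, 1%Z).
  by move=> w; rewrite A_cat /A /= Ax comp1f.
elim: n => [|n [IH1 IH2]].
  by rewrite /A /= Ax Ay /acomp /=; split; f_equal.
have E : Wx y x n.+1 = (Wx y x n ++ [:: x]) ++ [:: y] by rewrite /= -catA.
rewrite E; split; first by rewrite H1 IH2 /acomp; cbn [fst snd xorb]; f_equal; lia.
by rewrite H2 H1 IH2 /acomp; cbn [fst snd xorb]; f_equal; lia.
Qed.

Lemma Wx_J a b n : a \in J -> b \in J -> all (mem J) (Wx a b n).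
Proof. by move=> aJ bJ; elim: n => [|n IH] /=; rewrite ?aJ // all_cat IH /= aJ bJ. Qed.

Definition bnd (L : seq (seq T)) :=
  foldr (fun l m => maxn (Z.to_nat (Z.abs (tau x y l))) m) 0 L.

Lemma bnd_ge L l : l \in L -> (Z.abs (tau x y l) <= Z.of_nat (bnd L))%Z.
Proof.
elim: L => [|l' L IH] //; rewrite in_cons => /orP [/eqP ->|/IH]; rewrite /=; lia.
Qed.

Lemma connWx n : connK e J F [:: x] (Wx x y n).
Proof.
elim: n => [|n IH] /=.
  apply: connK0; last exact: weq_refl.
  by apply: avoids_A; rewrite (AWx 0).1; case.
rewrite -[[:: y; x]]/([:: y] ++ [:: x]) catA.
apply: connK_ext => //; last by apply: avoids_A; rewrite -catA (AWx n.+1).1; case.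
apply: connK_ext => //; apply: avoids_A; rewrite (AWx n).2; case; lia.
Qed.

Lemma connWy n : connK e J F [:: y] (Wx y x n).
Proof.
elim: n => [|n IH] /=.
  apply: connK0; last exact: weq_refl.
  apply: avoids_A; rewrite (AWy 0).1 /=; case; lia.
rewrite -[[:: x; y]]/([:: x] ++ [:: y]) catA.
apply: connK_ext => //.
  apply: connK_ext => //; apply: avoids_A; rewrite (AWy n).2; case; lia.
apply: avoids_A; rewrite -catA (AWy n.+1).1; case; lia.
Qed.

Lemma infx : infinite_comp e J F [:: x].
Proof.
move=> L; exists (Wx x y (bnd L)); split.
- exact: Wx_J.
- exact: connWx.
move=> l lL wl; have := bnd_ge lL; rewrite /tau -(weq_A e_sym e_irr nxy wl) (AWx _).1 /=.
lia.
Qed.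

Lemma infy : infinite_comp e J F [:: y].
Proof.
move=> L; exists (Wx y x (bnd L)); split.
- exact: Wx_J.
- exact: connWy.
move=> l lL wl; have := bnd_ge lL; rewrite /tau -(weq_A e_sym e_irr nxy wl) (AWy _).1 /=.
lia.
Qed.

Theorem not_one_ended : ~ one_ended e J.
Proof.
case=> _ /(_ F [:: x] [:: y]) H.
have := connK_sig (H _ _ infx infy) => /=; rewrite xJ yJ !nf1 /sig /= xK yK xC.
by rewrite (negbTE yC) => /(_ isT isT isT).
Qed.

End Side.

Lemma ex_min (P : nat -> Prop) : (exists n, P n) -> exists m, P m /\ forall k, P k -> m <= k.
Proof.
case=> n; elim/ltn_ind: n => n IH Pn.
case: (classic (exists k, k < n /\ P k)) => [[k [kn Pk]]|nk].
  exact: IH kn Pk.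
exists n; split => // k Pk; rewrite leqNgt; apply/negP => kn; apply: nk; exists k; split => //.
Qed.

Lemma logstep p q h : q <= p + 2 ^ h -> trunc_log 2 q - h <= trunc_log 2 p - h + 1.
Proof.
move=> hq.
case: (posnP q) => [->|qpos]; first by rewrite trunc_log0.
have hk : 2 ^ trunc_log 2 q <= q by apply: trunc_logP.
move: hk; set k := trunc_log 2 q => hk.
have hp : p < 2 ^ (trunc_log 2 p).+1 by apply: trunc_log_ltn.
case: (leqP k (maxn (trunc_log 2 p).+1 h)) => [kle|klt]; first by lia.
have k1 : (trunc_log 2 p).+1 < k by lia.
have k2 : h < k by lia.
have [k' Ek] : exists k', k = k'.+1 by exists k.-1; lia.
rewrite Ek in hk k1 k2.
have e1 : 2 ^ (trunc_log 2 p).+1 <= 2 ^ k' by apply: leq_pexp2l.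
have e2 : 2 ^ h <= 2 ^ k' by apply: leq_pexp2l.
move: hk; rewrite expnS; lia.
Qed.

Section Cusp.
Variables (T : finType) (e : rel T).
Hypotheses (e_sym : symmetric e) (e_irr : irreflexive e).
Variable (P : {set {set T}}).
Local Notation weq := (weq e).
Local Notation V := (cvert T).
Local Notation veq := (cveq e).
Local Notation adj := (cadj e P).
Local Notation path := (gpath veq adj).

Definition hgt (v : V) : nat := if v.2 is Some (_, n) then n.+1 else 0.
Definition lab (v : V) : option {set T} := omap fst v.2.

Lemma veq_refl a : veq a a.
Proof. by split => //; apply: weq_refl. Qed.
Lemma veq_sym a b : veq a b -> veq b a.
Proof. by case=> h1 h2; split; [rewrite h1 | apply: weq_sym]. Qed.
Lemma veq_trans a b c : veq a b -> veq b c -> veq a c.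
Proof. by case=> h1 h2 [h3 h4]; split; [rewrite h1 | apply: weq_trans h4]. Qed.

Lemma cadj0_veql a a' b : veq a a' -> cadj0 e P a b -> cadj0 e P a' b.
Proof.
case: a a' => [u o] [u' o'] [/= <- uu].
rewrite /cadj0 /=; case: o => [[J n]|]; case: b => [v [[J' n']|]] //=.
- move=> [JP [EJ [[En w]|[En [nw [x [xJ xs xw]]]]]]]; do 2 split => //.
    by left; split => //; apply: weq_trans (weq_sym uu) w.
  right; split => //; split.
    by move=> w; apply: nw; apply: weq_trans uu w.
  exists x; split => //; apply: weq_trans xw; apply: weq_catr; exact: weq_sym.
- by case: n' => // [[JP w]]; split => //; apply: weq_trans (weq_sym uu) w.
- case=> c w; exists c; apply: weq_trans w; apply: weq_catr; exact: weq_sym.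
Qed.

Lemma cadj0_veqr a b b' : veq b b' -> cadj0 e P a b -> cadj0 e P a b'.
Proof.
case: b b' => [v o] [v' o'] [/= <- vv].
rewrite /cadj0 /=; case: o => [[J n]|]; case: a => [u [[J' n']|]] //=.
- move=> [JP [EJ [[En w]|[En [nw [x [xJ xs xw]]]]]]]; do 2 split => //.
    by left; split => //; apply: weq_trans w vv.
  right; split => //; split.
    by move=> w; apply: nw; apply: weq_trans w (weq_sym vv).
  by exists x; split => //; apply: weq_trans xw vv.
- by case: n => // [[JP w]]; split => //; apply: weq_trans w vv.
- by case=> c w; exists c; apply: weq_trans w vv.
Qed.

Lemma adj_veql a a' b : veq a a' -> adj a b -> adj a' b.
Proof.
by move=> h [H|H]; [left; apply: cadj0_veql h H | right; apply: cadj0_veqr h H].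
Qed.

Lemma adj_sym a b : adj a b -> adj b a.
Proof. by case=> H; [right|left]. Qed.

Lemma path_veql n a a' b : veq a a' -> path n a b -> path n a' b.
Proof.
move=> h H; move: H h; case=> {n a b}.
- move=> a b ab h; apply: gpath0; exact: veq_trans (veq_sym h) ab.
- move=> n a b c ab bc h; apply: gpathS bc; exact: adj_veql h ab.
Qed.

Lemma path_cat n m a b c : path n a b -> path m b c -> path (n + m) a c.
Proof.
elim=> {n a b}.
- by move=> a b ab H; apply: path_veql H; apply: veq_sym.
- by move=> n a b d ab _ IH H; rewrite addSn; apply: gpathS ab (IH H).
Qed.

Lemma path_rev n a b : path n a b -> path n b a.
Proof.
elim=> {n a b}.
- by move=> a b ab; apply: gpath0; apply: veq_sym.
- move=> n a b c ab _ IH; rewrite -addn1; apply: path_cat IH _.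
  by apply: gpathS (adj_sym ab) (gpath0 adj (veq_refl a)).
Qed.

Lemma ex_dist n a b : path n a b -> exists d, is_dist veq adj a b d.
Proof. by move=> H; case: (@ex_min (fun k => path k a b) (ex_intro _ n H)) => d [Hd Hm]; exists d. Qed.

Lemma cadj0_lvl a b : cadj0 e P a b ->
  [/\ hgt a <= hgt b + 1, hgt b <= hgt a + 1 & lab a != lab b -> hgt a + hgt b = 1].
Proof.
rewrite /cadj0 /hgt /lab; case: a => [u [[J n]|]]; case: b => [v [[J' n']|]] //=.
- move=> [_ [-> [[-> _]|[-> _]]]]; split => //; rewrite ?eqxx //; lia.
- by case: n' => //.
Qed.

Lemma adj_lvl a b : adj a b ->
  [/\ hgt a <= hgt b + 1, hgt b <= hgt a + 1 & lab a != lab b -> hgt a + hgt b = 1].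
Proof.
case=> /cadj0_lvl [h1 h2 h3]; split => //.
by rewrite eq_sym addnC => /h3.
Qed.

Lemma path_lvl n a b : path n a b ->
  [/\ hgt b <= hgt a + n, hgt a <= hgt b + n & lab a != lab b -> hgt a + hgt b <= n].
Proof.
elim=> {n a b}.
- move=> a b [h _]; rewrite /hgt /lab h; split => //; [lia | lia | by rewrite eqxx].
- move=> n a b c /adj_lvl [h1 h2 h3] _ [i1 i2 i3]; split; [lia|lia|].
  move=> ac; case: (eqVneq (lab a) (lab b)) => [Eab|nab].
    by rewrite -Eab in i3; have := i3 ac; lia.
  have := h3 nab; lia.
Qed.

Section Lip.
Variables (s t : T).
Hypotheses (nst : ~~ e s t) (snt : s != t).

Definition ht (v : V) := Z.to_nat (Z.abs (tau s t v.1)).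
Definition Fv (v : V) := trunc_log 2 (ht v) - hgt v.

Lemma tau_weq u v : weq u v -> tau s t u = tau s t v.
Proof. by move=> h; rewrite /tau (weq_A e_sym e_irr nst h). Qed.

Lemma ht_step u w v : weq (u ++ w) v ->
  ht (v, None) <= ht (u, None) + size w /\ ht (u, None) <= ht (v, None) + size w.
Proof.
move=> h; rewrite /ht /= -(tau_weq h).
have := @tau_cat _ s t u w; lia.
Qed.

Lemma logstep2 p q h : q <= p + 2 ^ h -> p <= q + 2 ^ h ->
  trunc_log 2 q - h <= trunc_log 2 p - h + 1 /\ trunc_log 2 p - h <= trunc_log 2 q - h + 1.
Proof. by move=> h1 h2; split; apply: logstep. Qed.

Lemma cadj0_Fv a b : cadj0 e P a b -> Fv b <= Fv a + 1 /\ Fv a <= Fv b + 1.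
Proof.
rewrite /cadj0 /Fv /hgt; case: a => [u [[J n]|]]; case: b => [v [[J' n']|]] //=.
- move=> [_ [_ [[-> w]|[-> [_ [x [_ xs xw]]]]]]].
    have := tau_weq w; rewrite /ht /= => ->; lia.
  have [h1 h2] := ht_step xw; move: h1 h2; rewrite /ht /= => h1 h2.
  apply: logstep2; lia.
- case: n' => // [[_ w]]; have := tau_weq w; rewrite /ht /= => ->; lia.
- case=> c w; have [h1 h2] := ht_step w; move: h1 h2; rewrite /ht /= => h1 h2.
  have := @logstep2 (Z.to_nat (Z.abs (tau s t u))) (Z.to_nat (Z.abs (tau s t v))) 0.
  rewrite !subn0 expn0; apply; lia.
Qed.

Lemma path_Fv n a b : path n a b -> Fv b <= Fv a + n.
Proof.
elim=> {n a b}.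
- move=> [u o] [v o'] [/= <- w]; rewrite /Fv /ht /hgt /= (tau_weq w); lia.
- move=> n a b c [/cadj0_Fv|/cadj0_Fv] [h1 h2] _ IH; lia.
Qed.

End Lip.

Fixpoint stw (s t : T) n := if n is n'.+1 then stw s t n' ++ [:: s; t] else [::].

Lemma A_stw s t n : ~~ e s t -> s != t -> A s t (stw s t n) = (false, Z.of_nat (2 * n)).
Proof.
move=> nst snt; elim: n => [|n IH] //=.
rewrite A_cat IH /A /= /Al eqxx eq_sym (negbTE snt) eqxx /acomp; cbn [fst snd xorb].
f_equal; lia.
Qed.

Lemma size_stw s t n : size (stw s t n) = 2 * n.
Proof. elim: n => [|n IH] //=; rewrite size_cat IH /=; lia. Qed.

Lemma stw_J s t n (J : {set T}) : s \in J -> t \in J -> all (mem J) (stw s t n).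
Proof. by move=> sJ tJ; elim: n => [|n IH] //=; rewrite all_cat IH /= sJ tJ. Qed.

Lemma pathC u r : path (size r) (u, None) (u ++ r, None).
Proof.
elim: r u => [|c r IH] u /=; first by rewrite cats0; apply: gpath0; apply: veq_refl.
apply: (@gpathS _ _ _ _ _ (u ++ [:: c], None)).
  by left; exists c; apply: weq_refl.
by have := IH (u ++ [:: c]); rewrite -catA.
Qed.

Lemma pathUp u J i n : J \in P -> path i (u, Some (J, n)) (u, Some (J, n + i)).
Proof.
move=> JP; elim: i n => [|i IH] n; first by rewrite addn0; apply: gpath0; apply: veq_refl.
apply: (@gpathS _ _ _ _ _ (u, Some (J, n.+1))).
  by left; split => //; split => //; left; split => //; apply: weq_refl.
by rewrite addnS -addSn; apply: IH.
Qed.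

Lemma pathV u J n : J \in P -> path n.+1 (u, None) (u, Some (J, n)).
Proof.
move=> JP; apply: (@gpathS _ _ _ _ _ (u, Some (J, 0))).
  by left; split => //; apply: weq_refl.
exact: pathUp.
Qed.

Theorem not_clique (J J0 : {set T}) s t : J \in P -> J0 \in P -> J != J0 ->
  s \in J -> s \in J0 -> t \in J -> t \in J0 -> s != t -> ~~ e s t ->
  ~ gromov_hyperbolic veq adj.
Proof.
move=> JP J0P JJ0 sJ sJ0 tJ tJ0 snt nst [d H].
pose m := 2 * d + 2.
pose g := stw s t (2 ^ m).
have Ag : A s t g = (false, Z.of_nat (2 * 2 ^ m)) by apply: A_stw.
have sg : size g = 2 ^ m.+1 by rewrite size_stw expnS.
pose X : V := ([::], None).
pose Y : V := (g, None).
pose M1 : V := ([::], Some (J, m)).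
pose M2 : V := ([::], Some (J0, m)).
have pXY : path (2 ^ m.+1) X Y by rewrite -sg; apply: pathC.
have ng : ~ weq g [::].
  move/(weq_A e_sym e_irr nst); rewrite Ag /A /=; case; lia.
have hor : forall J', J' \in P -> s \in J' -> t \in J' ->
    path 1 (g, Some (J', m)) ([::], Some (J', m)).
  move=> J' J'P sJ' tJ'; apply: (@gpathS _ _ _ _ _ ([::], Some (J', m))).
    left; split => //; split => //; right; split => //; split => //.
    exists (rev g); split; first by rewrite all_rev stw_J.
      by rewrite size_rev sg.
    exact: weq_rev.
  by apply: gpath0; apply: veq_refl.
have pXM1 : path m.+1 X M1 by apply: pathV.
have pXM2 : path m.+1 X M2 by apply: pathV.
have pYM1 : path (m.+1 + 1) Y M1 by apply: path_cat (pathV g m JP) (hor J JP sJ tJ).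
have pYM2 : path (m.+1 + 1) Y M2 by apply: path_cat (pathV g m J0P) (hor J0 J0P sJ0 tJ0).
have pM : path (m.+1 + m.+1) M1 M2 by apply: path_cat (path_rev pXM1) pXM2.
have [dXY [HXY1 HXY2]] := ex_dist pXY.
have [dM [HM1 HM2]] := ex_dist pM.
have [dXM1 [HXM11 HXM12]] := ex_dist pXM1.
have [dXM2 [HXM21 HXM22]] := ex_dist pXM2.
have [dYM1 [HYM11 HYM12]] := ex_dist pYM1.
have [dYM2 [HYM21 HYM22]] := ex_dist pYM2.
have H4 := H X Y M1 M2 dXY dM dXM1 dYM2 dXM2 dYM1.
have b1 := HXM12 _ pXM1.
have b2 := HXM22 _ pXM2.
have b3 := HYM12 _ pYM1.
have b4 := HYM22 _ pYM2.
have b5 : 2 * m + 2 <= dM.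
  have [_ _ h] := path_lvl HM1; have := h; rewrite /lab /hgt /=.
  move=> /(_ _); rewrite inj_eq; last by move=> ? ? [].
  by move=> /(_ JJ0); lia.
have b6 : m.+1 <= dXY.
  have := path_Fv nst snt HXY1; rewrite /Fv /ht /tau Ag /= /X /=.
  have -> : Z.to_nat (Z.abs (Z.of_nat (2 * 2 ^ m))) = 2 ^ m.+1 by rewrite expnS; lia.
  rewrite trunc_expnK //= /A /=; rewrite trunc_log0; lia.
have := H4 (conj HXY1 HXY2) (conj HM1 HM2) (conj HXM11 HXM12) (conj HYM21 HYM22) (conj HXM21 HXM22) (conj HYM11 HYM12).
lia.
Qed.

End Cusp.

Unset Implicit Arguments.

Theorem lemma3p4 (T : finType) (e : rel T)
  (e_sym : symmetric e) (e_irr : irreflexive e)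
  (JJ : {set {set T}})
  (JJ_proper : forall J, J \in JJ -> J != [set: T])
  (one_end : one_ended e [set: T])
  (relhyp : rel_hyperbolic e JJ)
  (P_one_end : forall J, J \in JJ -> one_ended e J)
  (J0 : {set T}) (J0_in : J0 \in JJ)
  (sep : exists A : {set T}, A \subset J0 /\ separates e A) :
  exists G1 G2 : {set T},
    [/\ G1 :|: G2 = [set: T],
        (forall u v, e u v -> (u \in G1) && (v \in G1) || (u \in G2) && (v \in G2)),
        G1 != [set: T] /\ G2 != [set: T],
        G1 :&: G2 \subset J0 &
        forall J, J \in JJ -> (J \subset G1) || (J \subset G2)].
Proof.
case: sep => A [AJ0 [x0 [y0 [x0A y0A nxy]]]].
set R := induced_rel e (~: A).
have Rsym : symmetric R.
  move=> a b; rewrite /R /induced_rel /= e_sym.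
  by case: (a \in ~: A); case: (b \in ~: A); rewrite /= ?andbT ?andbF.
have cs : connect_sym R := sym_connect_sym Rsym.
have [z zJ0] : exists z, z \notin J0.
  case: (pickP (fun z => z \notin J0)) => [z zJ|none]; first by exists z.
  by move: (JJ_proper J0 J0_in); case/eqP; apply/setP => v; rewrite inE; apply/negbFE/none.
have zA : z \notin A by apply: contra zJ0; apply: (subsetP AJ0).
set C := [set v | connect R z v].
have pathA : forall p a, path R a p -> all (mem (~: A)) p.
  elim=> [|b p IH] a //= /andP [ab /IH ->]; rewrite andbT.
  by move: ab; rewrite /R /induced_rel /= => /and3P [].
have CA : forall v, v \in C -> v \notin A.
  move=> v; rewrite inE => /connectP [p pth ->].
  case: p pth => [|b p] pth //=.
  have := pathA _ _ pth => /allP /(_ (last b p)); rewrite mem_last inE => /(_ isT).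
  by rewrite inE.
have clos : forall u v, u \in C -> e u v -> v \notin A -> v \in C.
  move=> u v uC uv vA; move: (uC); rewrite !inE => zu.
  apply: connect_trans zu (connect1 _).
  by rewrite /R /induced_rel /= uv !inE vA (CA _ uC).
have key : forall J, J \in JJ -> J != J0 -> forall p q, p \in J -> q \in J ->
    p \notin A -> q \notin A -> connect R p q.
  move=> J JP JJ0 p q pJ qJ pA qA.
  case: (boolP (connect R p q)) => // npq; exfalso.
  set R' := induced_rel e (J :\: A).
  have R'sym : symmetric R'.
    move=> a b; rewrite /R' /induced_rel /= e_sym.
    by case: (a \in J :\: A); case: (b \in J :\: A); rewrite /= ?andbT ?andbF.
  apply: (@not_one_ended T e e_sym e_irr J (J :&: A) [set v | connect R' p v] _ _ p q).
  - move=> a b; rewrite !inE => /andP [aJ aA] /andP [bJ bA] ab.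
    apply/negPn/negP => nab.
    exact: (not_clique e_sym e_irr JP J0_in JJ0 aJ (subsetP AJ0 _ aA) bJ
      (subsetP AJ0 _ bA) ab nab relhyp).
  - move=> a b aJ bJ; rewrite !inE aJ bJ /= => aA bA ab.
    have Rab : R' a b by rewrite /R' /induced_rel /= ab !inE aJ bJ aA bA.
    have Rba : R' b a by rewrite R'sym.
    apply/idP/idP => h; [exact: connect_trans h (connect1 Rab)
                        | exact: connect_trans h (connect1 Rba)].
  - done.
  - done.
  - by rewrite inE negb_and pA orbT.
  - by rewrite inE negb_and qA orbT.
  - by rewrite inE connect0.
  - rewrite inE; apply: contra npq; apply: connect_sub => a b.
    rewrite /R' /induced_rel /= => /and3P [ab]; rewrite !inE => /andP [aA _] /andP [bA _].
    by apply: connect1; rewrite /R /induced_rel /= ab !inE aA bA.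
  - exact: P_one_end.
exists (C :|: A), (~: C :|: J0); split.
- by apply/setP => v; rewrite !in_setU in_setC in_setT; case: (v \in C); rewrite /= ?orbT.
- move=> u v uv; rewrite !in_setU !in_setC.
  case uC: (u \in C) => /=.
    case vA: (v \in A); first by rewrite orbT.
    by rewrite (clos u v) // vA.
  case vC: (v \in C) => /=; last by rewrite orbT.
  have uA : u \in A.
    apply/negPn/negP => uA; move: uC; rewrite (clos v u) //; by rewrite e_sym.
  by rewrite uA.
- split.
    apply/negP => /eqP E.
    have hx : x0 \in C :|: A by rewrite E inE.
    have hy : y0 \in C :|: A by rewrite E inE.
    move: hx hy; rewrite !inE (negbTE x0A) (negbTE y0A) !orbF => zx zy.
    case/negP: nxy; apply: connect_trans zy; by rewrite cs.
  apply/negP => /eqP E.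
  have : z \in ~: C :|: J0 by rewrite E inE.
  by rewrite !inE connect0 (negbTE zJ0).
- apply/subsetP => v; rewrite !inE => /andP [/orP [vC|vA] /orP [nvC|vJ0]] //.
  + by rewrite vC in nvC.
  + exact: (subsetP AJ0).
- move=> J JP.
  case: (eqVneq J J0) => [->|JJ0]; first by apply/orP; right; apply: subsetUr.
  case: (pickP (fun v => (v \in J) && (v \in C))) => [p /andP [pJ pC] | none].
    apply/orP; left; apply/subsetP => q qJ; rewrite !inE.
    case qA: (q \in A); first by rewrite orbT.
    move: (pC); rewrite inE => zp.
    have := key J JP JJ0 p q pJ qJ (CA p pC); rewrite qA => /(_ isT) pq.
    by rewrite (connect_trans zp pq).
  apply/orP; right; apply/subsetP => q qJ; rewrite in_setU in_setC.
  by move: (none q); rewrite qJ /= => ->.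
Qed.
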